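(* Let $\mathbb{K}$ be an algebraically closed field of characteristic $0$. Let $f\in\mathbb{K}[X,Y]$ have degree $d$ and let $G,H\in\mathbb{K}[X,Y]$ have degree $\le\nu-1$, where $\nu\ge d$. Suppose $P\in\mathbb{K}[X,Y]$ and $s\in\mathbb{N}$ satisfy $$\mathbf{d}\Big(\frac{P}{f^s}\Big)=\frac1f\big(G\,\mathbf{d}X+H\,\mathbf{d}Y\big),$$ i.e. $\partial_X(P/f^s)=G/f$ and $\partial_Y(P/f^s)=H/f$, and that $f$ does not divide $P$ if $s\ge1$. Then either $s=1$ and $\deg P\le\nu$, or $s=0$ and $\deg P\le\nu-d$. *)

(* Defs.v *)
From HB Require Import structures.
From mathcomp Require Import all_boot all_algebra.
From mathcomp Require Import mpoly.
Set Implicit Arguments. Unset Strict Implicit. Unset Printing Implicit Defensive.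
Import GRing.Theory.
Local Open Scope ring_scope.

(* Bivariate polynomials K[X,Y] are {mpoly K[2]}; X is variable 0, Y is variable 1. *)
Definition varX : 'I_2 := @Ordinal 2 0 isT.
Definition varY : 'I_2 := @Ordinal 2 1 isT.

(* Total degree: msize p = 1 + deg p (msize 0 = 0).  deg p <= k  <->  msize p <= k+1 *)
Definition deg_le (K : fieldType) (p : {mpoly K[2]}) (k : nat) : Prop :=
  (msize p <= k.+1)%N.

Definition mdvd (K : fieldType) (f P : {mpoly K[2]}) : Prop :=
  exists Q : {mpoly K[2]}, P = Q * f.

(* d_v (P / f^s) = G / f  (v = X or Y), written with the quotient rule
   d_v (P/f^s) = (f * d_v P - s * P * d_v f) / f^(s+1), after multiplying
   both sides by f^(s+1) (f <> 0). *)
Definition dlog_eq (K : fieldType) (v : 'I_2) (P f G : {mpoly K[2]}) (s : nat) : Prop :=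
  f * mderiv v P - (P * mderiv v f) *+ s = G * f ^+ s.

(* Main.v *)
From HB Require Import structures.
From mathcomp Require Import all_boot all_algebra.
From mathcomp Require Import mpoly.
From mathcomp Require Import ring zify.
Require Import Defs.
Set Implicit Arguments. Unset Strict Implicit. Unset Printing Implicit Defensive.
Import GRing.Theory.
Local Open Scope ring_scope.
Section Uni.
Variable K : closedFieldType.
Implicit Types g p r : {poly K}.

Lemma dvd_of_mup g p : g != 0 -> p != 0 ->
  (forall x, (mup x g <= mup x p)%N) -> g %| p.
Proof.
move=> + + H; have [n] := ubnP (size g); elim: n g p H => // n IH g p H.
move=> szg gn0 pn0.
have [/closed_rootP [x rx] | s1] := boolP (size g != 1%N); last first.
  move/negbNE: s1 => /size_poly1P [c cn0 ->].
  by apply/dvdpP; exists (p * (c^-1)%:P); rewrite -mulrA -polyCM mulVf // mulr1.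
have [g1 Hg] := factor_theorem _ _ rx.
have ux : ('X - x%:P) != 0 by rewrite polyXsubC_eq0.
have g1n0 : g1 != 0 by apply: contraNneq gn0 => ?; rewrite Hg; subst g1; rewrite mul0r.
have : (1 <= mup x p)%N.
  apply: leq_trans (H x); rewrite Hg mupM // (@mup_XsubCX _ 1) eqxx; exact: leq_addl.
rewrite mup_geq // expr1 => /dvdpP [p1 Hp].
have p1n0 : p1 != 0 by apply: contraNneq pn0 => ?; rewrite Hp; subst p1; rewrite mul0r.
rewrite Hg Hp dvdp_mul2r //; apply: IH => //.
- move=> y; have := H y; rewrite Hg Hp !mupM // leq_add2r //.
- by rewrite Hg size_mul // size_XsubC addn2 /= in szg.
Qed.

Lemma deriv_uX (x : K) n : ('X - x%:P : {poly K}) * (('X - x%:P) ^+ n)^`() = ('X - x%:P) ^+ n *+ n.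
Proof.
elim: n => [|n IH]; first by rewrite expr0 derivC mulr0.
rewrite exprS derivM derivXsubC mul1r mulrDr IH; ring.
Qed.

Hypothesis Kchar0 : [pchar K] =i pred0.

Lemma uni_dvd g p r s : g != 0 -> (2 <= s)%N ->
  g * p^`() - (p * g^`()) *+ s = r * g ^+ s -> g %| p.
Proof.
move=> gn0 s2 E.
have [->|pn0] := eqVneq p 0; first exact: dvdp0.
apply: dvd_of_mup => // x; rewrite leqNgt; apply/negP => klt.
have [m [g1 rg1 Hg]] := multiplicity_XsubC g x.
have [k [p1 rp1 Hp]] := multiplicity_XsubC p x.
rewrite gn0 /= in rg1; rewrite pn0 /= in rp1.
have g1n0 : g1 != 0 by apply: contraNneq rg1 => ->; rewrite root0.
have p1n0 : p1 != 0 by apply: contraNneq rp1 => ->; rewrite root0.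
set u := 'X - x%:P in Hg Hp.
have un0 : u != 0 by rewrite polyXsubC_eq0.
have mg : mup x g = m by rewrite Hg mupMr // /u mup_XsubCX eqxx.
have mp : mup x p = k by rewrite Hp mupMr // /u mup_XsubCX eqxx.
rewrite mg mp in klt.
have ug : u * g^`() = u ^+ m * (u * g1^`() + g1 *+ m).
  rewrite Hg derivM mulrDr [u * (g1 * _)]mulrCA /u deriv_uX -/u; ring.
have up : u * p^`() = u ^+ k * (u * p1^`() + p1 *+ k).
  rewrite Hp derivM mulrDr [u * (p1 * _)]mulrCA /u deriv_uX -/u; ring.
pose B := u * (g1 * p1^`() - (p1 * g1^`()) *+ s) - (g1 * p1) *+ (s * m - k).
have E2 : u * (g * p^`() - (p * g^`()) *+ s) = u ^+ (m + k) * B.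
  have -> : u * (g * p^`() - (p * g^`()) *+ s) = g * (u * p^`()) - (p * (u * g^`())) *+ s by ring.
  rewrite up ug Hg Hp /B mulrnBr; last first.
    by rewrite (leq_trans (ltnW klt)) // leq_pmull // (leq_trans _ s2).
  rewrite exprD; ring.
rewrite E in E2.
have hle : (m + k <= m * s)%N.
  rewrite mulnC; apply: (leq_trans _ (leq_mul s2 (leqnn m))).
  by rewrite mul2n -addnn leq_add2l ltnW.
have : B = u * (r * g1 ^+ s * u ^+ (m * s - (m + k))).
  apply: (mulfI (expf_neq0 (m+k) un0)); rewrite -E2 Hg exprMn -exprM.
  have -> : u ^+ (m * s) = u ^+ (m + k) * u ^+ (m * s - (m + k)) by rewrite -exprD subnKC.
  ring.
move=> HB; have : root B x.
  by rewrite -dvdp_XsubCl; apply/dvdpP; eexists; rewrite HB mulrC.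
rewrite /root /B hornerD hornerN hornerM hornerXsubC subrr mul0r add0r hornerMn hornerM.
rewrite oppr_eq0 -mulr_natr !mulf_eq0 (proj1 (pcharf0P K) Kchar0).
have -> : (s * m - k == 0)%N = false.
  by apply/negbTE; rewrite subn_eq0 -ltnNge mulnC (leq_trans klt) // leq_pmulr // (leq_trans _ s2).
by rewrite orbF -!/(root _ _) (negbTE rg1) (negbTE rp1).
Qed.
End Uni.

Lemma mdeg2 (m : 'X_{1..2}) : mdeg m = (m varX + m varY)%N.
Proof.
rewrite mdegE big_ord_recl big_ord1; congr (m _ + m _)%N; exact/val_inj.
Qed.

Section Twist.
Variable K : fieldType.
Variable lam : K.
Implicit Types p q : {mpoly K[2]}.

Definition Yt : {poly {poly K}} := ('X)%:P + (lam%:P)%:P * 'X.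
Definition hv (i : 'I_2) : {poly {poly K}} := if val i == 0%N then 'X else Yt.
Definition cc : {rmorphism K -> {poly {poly K}}} := (@polyC {poly K}) \o (@polyC K).
Definition psi : {rmorphism {mpoly K[2]} -> {poly {poly K}}} := mmap cc hv.

Definition Yb : {mpoly K[2]} := 'X_varY - lam *: 'X_varX.
Definition chi1 : {rmorphism {poly K} -> {mpoly K[2]}} := horner_eval Yb \o map_poly (@mpolyC 2 K).
Definition chi : {rmorphism {poly {poly K}} -> {mpoly K[2]}} := horner_eval 'X_varX \o map_poly chi1.

Lemma ord2_0 : (ord0 : 'I_2) = varX. Proof. exact/val_inj. Qed.
Lemma ord2_1 : (lift ord0 ord0 : 'I_2) = varY. Proof. exact/val_inj. Qed.

Lemma mmap1_2 (m : 'X_{1..2}) : mmap1 hv m = 'X ^+ (m varX) * Yt ^+ (m varY).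
Proof. by rewrite /mmap1 big_ord_recl big_ord1 ord2_1 ord2_0 /hv. Qed.

Lemma ccE c : cc c = c%:P%:P. Proof. by []. Qed.

Lemma psiZX c m : psi (c *: 'X_[m]) = (c%:P)%:P * ('X ^+ (m varX) * Yt ^+ (m varY)).
Proof. by rewrite /psi /= (@mmapZ _ _ _ hv cc) (@mmapX _ _ _ hv cc) mmap1_2. Qed.

Lemma psiC c : psi c%:MP = (c%:P)%:P.
Proof. by rewrite /psi /= (@mmapC _ _ _ hv cc). Qed.

Lemma deriv_exp' (q : {poly {poly K}}) k : (q ^+ k)^`() = q^`() * q ^+ k.-1 *+ k.
Proof.
elim: k => [|k IH]; first by rewrite expr0 derivC mulr0n.
rewrite exprS derivM IH; case: k {IH} => [|k] /=; first by rewrite expr0 !mulr1 mulr0n mulr0 addr0.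
rewrite exprS; ring.
Qed.

Lemma psi_deriv p : (psi p)^`() = psi (mderiv varX p + lam *: mderiv varY p).
Proof.
elim/mpolyind: p => [|c m p _ _ IH].
  by rewrite !raddf0 addr0 raddf0.
rewrite [psi (_ + _)]raddfD derivD IH mderivD mderivD scalerDr.
have -> : mderiv varX (c *: 'X_[m]) + mderiv varX p +
    (lam *: mderiv varY (c *: 'X_[m]) + lam *: mderiv varY p) =
    (mderiv varX (c *: 'X_[m]) + lam *: mderiv varY (c *: 'X_[m])) +
    (mderiv varX p + lam *: mderiv varY p) by ring.
rewrite [RHS]raddfD; congr (_ + _).
rewrite !mderivZ !mderivX !scalerA raddfD /= !psiZX.
rewrite !mnmBE !mnm1E /= !subn0.
rewrite derivM derivC mul0r add0r derivM !deriv_exp' derivX.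
have -> : Yt^`() = (lam%:P)%:P by rewrite /Yt derivD !derivC derivM derivC derivX !(mul0r, add0r, mulr1).
rewrite !rmorphM /= !rmorph_nat.
case: (m varX) => [|a]; case: (m varY) => [|b] /=; rewrite ?subn0 ?subn1 /=; ring.
Qed.

Lemma chi1C c : chi1 c%:P = c%:MP.
Proof. by rewrite /chi1 /= map_polyC horner_evalE hornerC. Qed.
Lemma chi1X : chi1 'X = Yb.
Proof. by rewrite /chi1 /= map_polyX horner_evalE hornerX. Qed.
Lemma chiC (q : {poly K}) : chi q%:P = chi1 q.
Proof. by rewrite /chi /= map_polyC horner_evalE hornerC. Qed.
Lemma chiX : chi 'X = 'X_varX.
Proof. by rewrite /chi /= map_polyX horner_evalE hornerX. Qed.
Lemma chiYt : chi Yt = 'X_varY.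
Proof.
rewrite /Yt rmorphD rmorphM !chiC chiX chi1C chi1X /Yb -mul_mpolyC; ring.
Qed.

Lemma chi_psi p : chi (psi p) = p.
Proof.
elim/mpolyind: p => [|c m p _ _ IH]; first by rewrite !rmorph0.
rewrite rmorphD rmorphD IH; congr (_ + _).
rewrite psiZX !rmorphM !rmorphXn chiX chiYt !chiC chi1C -mul_mpolyC; congr (_ * _).
by rewrite [RHS]mpolyXE_id big_ord_recl big_ord1 ord2_1 ord2_0.
Qed.

Lemma Yt_exp b : (size (Yt ^+ b) <= b.+1)%N /\ (Yt ^+ b)`_b = (lam ^+ b)%:P.
Proof.
elim: b => [|b [IHs IHc]]; first by rewrite !expr0 size_poly1 coefC.
have sYt : (size Yt <= 2)%N.
  rewrite /Yt; apply: (leq_trans (size_polyD _ _)); rewrite geq_max.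
  rewrite (leq_trans (size_polyC_leq1 _)) //=.
  by rewrite mul_polyC (leq_trans (size_scale_leq _ _)) // size_polyX.
split.
  rewrite exprSr; apply: (leq_trans (size_polyMleq _ _)).
  by rewrite -subn1 leq_subLR add1n -addn2 leq_add.
rewrite exprSr; set Q := Yt ^+ b in IHc IHs *.
rewrite /Yt mulrDr coefD mulrA coefMX /= !coefMC IHc.
have -> : Q`_b.+1 = 0 by apply/(leq_sizeP _ _ IHs).
by rewrite mul0r add0r -polyCM exprSr.
Qed.

Lemma mono_size (a b : nat) : (size ((('X^a : {poly {poly K}}) * Yt ^+ b)%R) <= (a + b).+1)%N.
Proof.
apply: (leq_trans (size_polyMleq _ _)); rewrite size_polyXn /=.
by rewrite -addnS leq_add2l (proj1 (Yt_exp b)).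
Qed.

Lemma mono_coef (a b : nat) : (('X^a : {poly {poly K}}) * Yt ^+ b)`_(a + b) = (lam ^+ b)%:P.
Proof. by rewrite coefXnM ltnNge leq_addr /= addKn (proj2 (Yt_exp b)). Qed.

Lemma psiE p : psi p = \sum_(m <- msupp p) ((p@_m)%:P)%:P * ('X^(m varX) * Yt ^+ (m varY)).
Proof. by rewrite /psi /= /mmap; apply: eq_bigr => m _; rewrite mmap1_2. Qed.

Lemma psi_size p k : (msize p <= k.+1)%N -> (size (psi p) <= k.+1)%N.
Proof.
move=> hp; rewrite psiE; apply: (leq_trans (size_sum _ _ _)).
apply/bigmax_leqP_seq => m hm _.
apply: (leq_trans (size_polyMleq _ _)).
have h1 := size_polyC_leq1 ((p@_m)%:P); have h2 := mono_size (m varX) (m varY).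
have h3 := msize_mdeg_lt hm; rewrite mdeg2 in h3.
rewrite -subn1 leq_subLR; move: h1 h2 h3 hp.
set x := size _; set y := size _; set z := msize p; lia.
Qed.

Lemma psi_coef p k : (msize p <= k.+1)%N ->
  (psi p)`_k = (\sum_(m <- msupp p | mdeg m == k) p@_m * lam ^+ (m varY))%:P.
Proof.
move=> hp; rewrite psiE coef_sum rmorph_sum [RHS]big_mkcond /= !big_seq; apply: eq_bigr => m hm.
rewrite coefCM; have [e|ne] := eqVneq (mdeg m) k.
  by rewrite -e mdeg2 mono_coef -polyCM.
have hlt : (mdeg m < k)%N.
  by rewrite ltn_neqAle ne -ltnS (leq_trans (msize_mdeg_lt hm)).
have hs : (size ((('X^(m varX) : {poly {poly K}}) * Yt ^+ (m varY))%R) <= k)%N.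
  by rewrite (leq_trans (mono_size _ _)) // -mdeg2.
by move/leq_sizeP: hs => ->; rewrite ?mulr0.
Qed.

End Twist.

Definition gp (K : fieldType) (p : {mpoly K[2]}) k : {poly K} :=
  \sum_(m <- msupp p | mdeg m == k) p@_m *: 'X^(m varY).

Lemma gp_horner (K : fieldType) (p : {mpoly K[2]}) k lam :
  (gp p k).[lam] = \sum_(m <- msupp p | mdeg m == k) p@_m * lam ^+ (m varY).
Proof. by rewrite /gp horner_sum; apply: eq_bigr => m _; rewrite hornerZ hornerXn. Qed.


Lemma ord2_cases (i : 'I_2) : i = varX \/ i = varY.
Proof.
case: i => [[|[|n]] h]; [left|right|by []]; exact/val_inj.
Qed.

Lemma gp_neq0 (K : fieldType) (p : {mpoly K[2]}) k : msize p = k.+1 -> gp p k != 0.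
Proof.
move=> hp.
have pn0 : p != 0 by rewrite -msize_poly_eq0 hp.
set m0 := mlead p.
have hm0 : m0 \in msupp p by exact: mlead_supp.
have dm0 : mdeg m0 = k by apply/succn_inj; rewrite mlead_deg.
apply/eqP => /(congr1 (fun q : {poly K} => q`_(m0 varY))).
rewrite coef0 /gp coef_sum big_mkcond /= (bigD1_seq m0) ?msupp_uniq //=.
rewrite dm0 eqxx coefZ coefXn eqxx mulr1 big1 ?addr0.
  by move/eqP; rewrite mcoeff_eq0 hm0.
move=> m ne; case: eqP => // e; rewrite coefZ coefXn.
case: eqP => [e2|]; last by rewrite mulr0.
case/eqP: ne; apply/mnmP => i; case: (ord2_cases i) => ->; last by [].
by move: e; rewrite -dm0 !mdeg2 e2 => /addIn.
Qed.

Section Euler.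
Variable K : fieldType.
Implicit Types p q : {mpoly K[2]}.

Definition Eu p := 'X_varX * mderiv varX p + 'X_varY * mderiv varY p.

Lemma EuD p q : Eu (p + q) = Eu p + Eu q.
Proof. rewrite /Eu !mderivD; ring. Qed.
Lemma EuB p q : Eu (p - q) = Eu p - Eu q.
Proof. rewrite /Eu !mderivB; ring. Qed.
Lemma Eu0 : Eu 0 = 0.
Proof. by rewrite /Eu !mderiv0 !mulr0 addr0. Qed.
Lemma EuZ c p : Eu (c *: p) = c *: Eu p.
Proof. by rewrite /Eu !mderivZ scalerDr !scalerAr. Qed.
Lemma EuM p q : Eu (p * q) = Eu p * q + p * Eu q.
Proof. rewrite /Eu !mderivM; ring. Qed.

Lemma XmderivX (i : 'I_2) (m : 'X_{1..2}) :
  'X_i * mderiv i 'X_[m] = (m i)%:R *: ('X_[m] : {mpoly K[2]}).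
Proof.
rewrite mderivX -scalerAr.
have [->|mi] := eqVneq (m i) 0%N; first by rewrite !scale0r.
by rewrite -mpolyXD addmC submK // lep1mP.
Qed.

Lemma EuX m : Eu 'X_[m] = (mdeg m)%:R *: ('X_[m] : {mpoly K[2]}).
Proof. by rewrite /Eu !XmderivX -scalerDl -natrD mdeg2. Qed.

Lemma EuE p : Eu p = \sum_(m <- msupp p) ((mdeg m)%:R * p@_m) *: 'X_[m].
Proof.
rewrite {1}(mpolyE p); elim: (msupp p) => [|m r IH].
  by rewrite !big_nil Eu0.
by rewrite !big_cons EuD IH EuZ EuX scalerA mulrC.
Qed.

Lemma msize_Eu_rem p k : (msize p <= k.+1)%N ->
  (msize (k%:R *: p - Eu p) <= k)%N.
Proof.
move=> hp.
have -> : k%:R *: p - Eu p =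
   \sum_(m <- msupp p) ((k%:R - (mdeg m)%:R) * p@_m) *: 'X_[m].
  rewrite EuE {1}(mpolyE p) scaler_sumr -sumrB; apply: eq_bigr => m _.
  by rewrite scalerA -scalerBl mulrBl.
apply: (leq_trans (msize_sum _ _ _)).
apply/bigmax_leqP_seq => m hm _.
have hlt := msize_mdeg_lt hm.
have [e|ne] := eqVneq (mdeg m) k.
  by rewrite e subrr mul0r scale0r msize0.
apply: (leq_trans (msizeZ_le _ _)); rewrite msizeX.
by rewrite ltn_neqAle ne -ltnS (leq_trans hlt hp).
Qed.


Lemma msizeD_dom p q : (msize q < msize p)%N -> msize (p + q) = msize p.
Proof.
move=> h; apply/eqP; rewrite eqn_leq; apply/andP; split.
  by apply: (leq_trans (msizeD_le _ _)); rewrite geq_max leqnn ltnW.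
have := msizeD_le (p + q) (- q); rewrite addrK msizeN => h2.
move: (leq_trans h2 (leqnn _)); rewrite leq_max => /orP [//|h3].
by move: (leq_ltn_trans h3 h); rewrite ltnn.
Qed.

Lemma msizeM_le1 p q : (msize (p * q) <= (msize p + msize q).-1)%N.
Proof.
have [->|pn0] := eqVneq p 0; first by rewrite mul0r msize0.
have [->|qn0] := eqVneq q 0; first by rewrite mulr0 msize0.
by rewrite msizeM.
Qed.

Hypothesis Kchar0 : [pchar K] =i pred0.

Lemma natr_neq0 k : (k != 0)%N -> (k%:R : K) != 0.
Proof. by rewrite (proj1 (pcharf0P K) Kchar0). Qed.

Lemma msize_Eu p e : msize p = e.+2 -> msize (Eu p) = e.+2.
Proof.
move=> hp.
have -> : Eu p = e.+1%:R *: p + - (e.+1%:R *: p - Eu p) by rewrite opprB addrC subrK.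
rewrite msizeD_dom msizeZ ?natr_neq0 //.
by rewrite msizeN hp ltnS msize_Eu_rem // hp.
Qed.

Lemma msize_key f P d e : msize f = d.+1 -> msize P = e.+1 -> (d < e)%N ->
  msize (f * Eu P - P * Eu f) = (d + e).+1.
Proof.
move=> hf hP de.
set RP := e%:R *: P - Eu P; set Rf := d%:R *: f - Eu f.
have EP : Eu P = e%:R *: P - RP by rewrite /RP opprB addrC subrK.
have Ef : Eu f = d%:R *: f - Rf by rewrite /Rf opprB addrC subrK.
have fn0 : f != 0 by rewrite -msize_poly_eq0 hf.
have Pn0 : P != 0 by rewrite -msize_poly_eq0 hP.
have -> : f * Eu P - P * Eu f = (e - d)%:R *: (f * P) + (P * Rf - f * RP).
  rewrite EP Ef natrB ?(ltnW de) // -!mul_mpolyC rmorphB /=; ring.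
have hm : msize ((e - d)%:R *: (f * P)) = (d + e).+1.
  rewrite msizeZ; first by rewrite msizeM // hf hP addSn addnS.
  by apply: natr_neq0; rewrite subn_eq0 -ltnNge.
rewrite (@msizeD_dom ((e - d)%:R *: (f * P))) hm //.
apply: (leq_ltn_trans (msizeD_le _ _)); rewrite msizeN gtn_max; apply/andP; split.
  apply: (leq_ltn_trans (msizeM_le1 _ _)); rewrite hP addSn /= ltnS addnC leq_add2r.
  by rewrite msize_Eu_rem // hf.
apply: (leq_ltn_trans (msizeM_le1 _ _)); rewrite hf addSn /= ltnS leq_add2l.
by rewrite msize_Eu_rem // hP.
Qed.

End Euler.


Lemma msize_XG (K : fieldType) (i : 'I_2) (G : {mpoly K[2]}) :
  (msize ('X_i * G) <= (msize G).+1)%N.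
Proof. by apply: (leq_trans (msizeM_le1 _ _)); rewrite msizeX mdeg1. Qed.

Lemma msize_XGYH (K : fieldType) (G H : {mpoly K[2]}) nu :
  (msize G <= nu)%N -> (msize H <= nu)%N ->
  (msize ('X_varX * G + 'X_varY * H) <= nu.+1)%N.
Proof.
move=> hG hH; apply: (leq_trans (msizeD_le _ _)); rewrite geq_max.
by rewrite !(leq_trans (msize_XG _ _)).
Qed.


Lemma big_case (K : closedFieldType) (Kchar0 : [pchar K] =i pred0)
  (f G H P : {mpoly K[2]}) d s : msize f = d.+1 -> (2 <= s)%N ->
  dlog_eq varX P f G s -> dlog_eq varY P f H s -> mdvd f P.
Proof.
move=> hf s2 hX hY.
have /closed_nonrootP [lam hl] := gp_neq0 hf.
set a := (gp f d).[lam].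
have an0 : a != 0 by [].
set F := psi lam f.
have hsF : (size F <= d.+1)%N by apply: psi_size; rewrite hf.
have hcF : F`_d = a%:P by rewrite /F psi_coef ?hf // /a gp_horner.
pose Dl p := mderiv varX p + lam *: mderiv varY p.
have hE : f * Dl P - (P * Dl f) *+ s = (G + lam *: H) * f ^+ s.
  move: hX hY; rewrite /dlog_eq /Dl -!mul_mpolyC => hX hY.
  have -> : f * (P^`M(varX) + lam%:MP * P^`M(varY)) -
     P * (f^`M(varX) + lam%:MP * f^`M(varY)) *+ s =
     (f * P^`M(varX) - P * f^`M(varX) *+ s) + lam%:MP * (f * P^`M(varY) - P * f^`M(varY) *+ s) by ring.
  rewrite hX hY; ring.
have hE' : F * (psi lam P)^`() - (psi lam P * F^`()) *+ s = psi lam (G + lam *: H) * F ^+ s.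
  by have := congr1 (psi lam) hE; rewrite rmorphB rmorphMn !rmorphM rmorphXn !psi_deriv.
have hphiF : forall c : K, (map_poly (horner_eval c) F)`_d = a.
  by move=> c; rewrite coef_map /= hcF horner_evalE hornerC.
have hsphiF : forall c : K, (size (map_poly (horner_eval c) F) <= d.+1)%N.
  move=> c; apply/leq_sizeP => j hj; rewrite coef_map.
  by move/leq_sizeP: hsF => /(_ j hj) ->; rewrite /= horner_evalE horner0.
have hdv : forall c : K, map_poly (horner_eval c) F %| map_poly (horner_eval c) (psi lam P).
  move=> c; apply: (uni_dvd Kchar0 _ s2 (r := map_poly (horner_eval c) (psi lam (G + lam *: H)))).
    by apply/eqP => h0; move: (hphiF c); rewrite h0 coef0 => /esym/eqP; rewrite (negbTE an0).
  by have := congr1 (map_poly (horner_eval c)) hE'; rewrite rmorphB rmorphMn !rmorphM rmorphXn !deriv_map.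
set Pd := psi lam P.
pose Fm := ((a^-1)%:P)%:P * F.
have sF : size F = d.+1.
  apply/eqP; rewrite eqn_leq hsF /= ltnNge; apply/negP => h.
  by move/leq_sizeP: h => /(_ d (leqnn d)) /eqP; rewrite hcF polyC_eq0 (negbTE an0).
have lF : lead_coef F = a%:P by rewrite lead_coefE sF hcF.
have monFm : Fm \is monic.
  by rewrite monicE /Fm lead_coefM lead_coefC lF -polyCM mulVf.
have sFm : size Fm = d.+1.
  by rewrite /Fm size_Cmul ?sF // polyC_eq0 invr_eq0.
have hdiv := Pdiv.IdomainMonic.divp_eq monFm Pd.
set Q := Pd %/ Fm in hdiv; set Rm := Pd %% Fm in hdiv.
have hRs : (size Rm <= d)%N.
  by rewrite -ltnS -sFm ltn_modp monic_neq0.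
have hR0 : Rm = 0.
  apply/polyP => i; rewrite coef0; apply/eqP; apply: contraT => hne.
  move/closed_nonrootP: hne => [c hc].
  set phi := map_poly (horner_eval c).
  have e : phi Rm = phi Pd - phi Q * ((a^-1)%:P * phi F).
    rewrite [in phi Pd]hdiv /phi rmorphD rmorphM /Fm rmorphM /= map_polyC /=.
    by rewrite horner_evalE hornerC addrC addKr.
  have dv : phi F %| phi Rm.
    by rewrite e dvdp_sub ?hdv // !dvdp_mull ?dvdpp.
  have sR : (size (phi Rm) <= d)%N.
    apply/leq_sizeP => j hj; rewrite coef_map.
    by move/leq_sizeP: hRs => /(_ j hj) ->; rewrite /= horner_evalE horner0.
  have phR : phi Rm = 0.
    apply/eqP; apply: contraT => hn.
    have := dvdp_leq hn dv => h2.
    move/leq_sizeP: (leq_trans h2 sR) => /(_ d (leqnn d)) /eqP.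
    by rewrite hphiF (negbTE an0).
  by move: hc; rewrite /root -horner_evalE -coef_map -/phi phR coef0 eqxx.
rewrite hR0 addr0 /Fm mulrA in hdiv.
exists (chi lam (Q * (a^-1)%:P%:P)).
by rewrite -{1}(chi_psi lam P) -/Pd hdiv rmorphM /F chi_psi.
Qed.

Theorem lemma1p2 (K : closedFieldType) (Kchar0 : [pchar K] =i pred0)
  (f G H P : {mpoly K[2]}) (d nu s : nat)
  (hf : msize f = d.+1)
  (hG : (msize G <= nu)%N) (hH : (msize H <= nu)%N) (* deg <= nu-1 *) (hnu : (d <= nu)%N)
  (hX : dlog_eq varX P f G s) (hY : dlog_eq varY P f H s)
  (hdiv : (1 <= s)%N -> ~ mdvd f P) :
  (s = 1%N /\ deg_le P nu) \/ (s = 0%N /\ deg_le P (nu - d)).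
Proof.
have fn0 : f != 0 by rewrite -msize_poly_eq0 hf.
have hR := msize_XGYH hG hH.
move: hX hY; rewrite /dlog_eq /deg_le.
case: s hdiv => [|[|s]] hdiv hX hY.
- right; split => //.
  rewrite mulr0n subr0 expr0 mulr1 in hX; rewrite mulr0n subr0 expr0 mulr1 in hY.
  have hE : f * Eu P = 'X_varX * G + 'X_varY * H by rewrite /Eu -hX -hY; ring.
  case hP: (msize P) => [|[|e]] //.
  have hEu := msize_Eu Kchar0 hP.
  have Eun0 : Eu P != 0 by rewrite -msize_poly_eq0 hEu.
  move: hR; rewrite -hE msizeM // hf hEu /=; lia.
- left; split => //.
  rewrite mulr1n expr1 in hX; rewrite mulr1n expr1 in hY.
  have hE : f * Eu P - P * Eu f = ('X_varX * G + 'X_varY * H) * f.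
    have -> : ('X_varX * G + 'X_varY * H) * f = 'X_varX * (G * f) + 'X_varY * (H * f) by ring.
    rewrite -hX -hY /Eu; ring.
  case: (leqP (msize P) nu.+1) => // hlt.
  exfalso.
  have [e hP] : exists e, msize P = e.+1 by exists (msize P).-1; rewrite prednK // (leq_ltn_trans _ hlt).
  have := msize_key Kchar0 hf hP ltac:(lia).
  have h1 := msizeM_le1 ('X_varX * G + 'X_varY * H) f.
  rewrite hf addnS /= in h1.
  rewrite hE; move: h1 hR hP hlt hnu.
  set a := msize (_ * f); set b := msize (_ + _); lia.
- exfalso; apply: (hdiv isT).
  exact: (big_case Kchar0 hf _ hX hY).
Qed.
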